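(* If $G$ is a connected bipartite graph with $n(G)\ge 3$ vertices, then $\dim_{n\ell}(G)=\dim(G)$.
   Context: Graphs are finite, simple and connected; $d_G(u,v)$ is the shortest-path distance and $n(G)$ the number of vertices. A set $X\subseteq V(G)$ resolves two vertices $u,v$ if some $x\in X$ satisfies $d_G(u,x)\neq d_G(v,x)$. $X$ is a resolving set if it resolves every pair of distinct vertices; the metric dimension $\dim(G)$ is the minimum size of a resolving set. $X$ is a nonlocal resolving set if it resolves every pair of distinct non-adjacent vertices; the nonlocal metric dimension $\dim_{n\ell}(G)$ is the minimum size of a nonlocal resolving set (so $\dim_{n\ell}(K_n)=0$), and a nonlocal metric basis is a nonlocal resolving set of this minimum size. *)

(* Defs.v *)
From mathcomp Require Import all_boot.
Set Implicit Arguments. Unset Strict Implicit. Unset Printing Implicit Defensive.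

Section Graphs.
Variables (T : finType) (e : rel T).

Definition simple_graph : Prop := irreflexive e /\ symmetric e.

Definition connected_graph : Prop := forall u v : T, connect e u v.

Definition bipartite : Prop :=
  exists c : T -> bool, forall x y, e x y -> c x != c y.

Definition ball (u : T) (k : nat) : {set T} :=
  iter k (fun S => S :|: [set y | [exists x in S, e x y]]) [set u].

(* shortest-path distance: least k with v within k steps of u
   (a connected graph on #|T| vertices has all distances < #|T|;
   value #|T| is returned only for unreachable pairs) *)
Definition dist (u v : T) : nat :=
  find (fun k => v \in ball u k) (iota 0 #|T|).

Definition resolves (X : {set T}) (u v : T) : bool :=
  [exists x in X, dist u x != dist v x].

Definition resolving_set (X : {set T}) : bool :=
  [forall u, forall v, (u != v) ==> resolves X u v].

Definition nonlocal_resolving_set (X : {set T}) : bool :=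
  [forall u, forall v, ((u != v) && ~~ e u v) ==> resolves X u v].

(* metric dimension: size of a minimum resolving set
   ([set: T] is always resolving) *)
Definition metric_dim : nat :=
  #|[arg min_(X < [set: T] | resolving_set X) #|X|]|.

Definition nonlocal_metric_dim : nat :=
  #|[arg min_(X < [set: T] | nonlocal_resolving_set X) #|X|]|.

End Graphs.

(* Main.v *)
Require Import Defs.
From mathcomp Require Import all_boot.

Section Aux.
Variables (T : finType) (e : rel T).

Lemma ballS u k : ball e u k.+1 = ball e u k :|: [set y | [exists x in ball e u k, e x y]].
Proof. by []. Qed.

Lemma ball_sub u k y : y \in ball e u k -> y \in ball e u k.+1.
Proof. by rewrite ballS inE => ->. Qed.

Lemma ball_mono u i j y : i <= j -> y \in ball e u i -> y \in ball e u j.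
Proof.
move=> /subnK <-; elim: (j - i) => [//|n IH] H; rewrite addSn; exact/ball_sub/IH.
Qed.

Lemma ball_step u k a b : a \in ball e u k -> e a b -> b \in ball e u k.+1.
Proof.
move=> Ha Hab; rewrite ballS !inE; apply/orP; right; apply/existsP; exists a.
by rewrite Ha.
Qed.

Lemma ball_path u p a s : path e a p -> a \in ball e u s -> last a p \in ball e u (s + size p).
Proof.
elim: p a s => [|b p IH] a s /=; first by rewrite addn0.
move=> /andP [Hab Hp] Ha; rewrite addnS -addSn; apply: IH => //.
exact: ball_step Ha Hab.
Qed.

Lemma ball0 u : ball e u 0 = [set u].
Proof. by []. Qed.

Lemma parity (c : T -> bool) u :
  (forall x y, e x y -> c x != c y) ->
  forall k y, y \in ball e u k -> (k == 0) || (y \notin ball e u k.-1) ->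
   c y = c u (+) odd k.
Proof.
move=> Hc; elim=> [|k IH] y.
  by rewrite ball0 inE => /eqP -> _ /=; rewrite addbF.
rewrite ballS inE /= => /orP [-> //|]; rewrite inE => /existsP [x /andP [Hx Hxy]] Hy.
have Hnew : (k == 0) || (x \notin ball e u k.-1).
  case: k IH Hx Hxy Hy => [//|k] IH Hx Hxy Hy /=.
  apply/negP => Hx'; move: Hy; rewrite (ball_step _ _ _ _ Hx' Hxy) //.
have := Hc _ _ Hxy; rewrite (IH x Hx Hnew).
by case: (c y); case: (c u); case: (odd k).
Qed.

End Aux.

Theorem proposition2p2 (T : finType) (e : rel T) :
  simple_graph e -> connected_graph e -> bipartite e -> 3 <= #|T| ->
  nonlocal_metric_dim e = metric_dim e.
Proof.
move=> [Hirr Hsym] Hconn [c Hc] H3.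
have Hdist : forall u x, odd (dist e u x) = c x (+) c u.
  move=> u x.
  have Hhas : has (fun k => x \in ball e u k) (iota 0 #|T|).
    have := Hconn u x; case/connectP => p Hp Hl.
    case/shortenP: Hp Hl => p' Hp' Hu _ Hl.
    apply/hasP; exists (size p'); last first.
      by rewrite Hl -(add0n (size p')); apply: ball_path => //; rewrite ball0 inE.
    rewrite mem_iota /= add0n.
    have Hs := card_uniqP Hu.
    have := max_card (mem (u :: p')); rewrite Hs /=; done.
  set k := dist e u x.
  have Hk : x \in ball e u k.
    have Hlt : k < #|T| by rewrite -[in X in _ < X](size_iota 0 #|T|) -has_find.
    by have := nth_find 0 Hhas; rewrite nth_iota ?add0n.
  have Hmin : (k == 0) || (x \notin ball e u k.-1).
    case Ek: k => [//|k'] /=.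
    have Hlt : k' < find (fun k => x \in ball e u k) (iota 0 #|T|) by rewrite -/(dist e u x) -/k Ek.
    have := before_find 0 Hlt; rewrite nth_iota ?add0n => [->//|].
    apply: (ltn_trans Hlt); by rewrite -[in X in _ < X](size_iota 0 #|T|) -has_find.
  have := @parity T e c u Hc k x Hk Hmin.
  by case: (c x); case: (c u); case: (odd k).
have [a [b [Hab Hnab]]] : exists a b : T, a != b /\ ~~ e a b.
  have Hs : 2 < size (enum T) by rewrite -cardE.
  have Hu := enum_uniq T.
  case Ee: (enum T) Hs Hu => [|p [|q [|r s]]] //= _ /and3P [Hp Hq _].
  rewrite !inE !negb_or in Hp Hq.
  case/andP: Hp => Hpq /andP [Hpr _]; case/andP: Hq => Hqr _.
  have Hne : forall x y, c x = c y -> ~~ e x y.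
    by move=> x y Hxy; apply/negP => /Hc; rewrite Hxy eqxx.
  case Cp: (c p); case Cq: (c q); case Cr: (c r);
   first [ (exists p, q; split; [done | apply: (Hne _ _); by rewrite Cp Cq])
             | (exists p, r; split; [done | apply: (Hne _ _); by rewrite Cp Cr])
             | (exists q, r; split; [done | apply: (Hne _ _); by rewrite Cq Cr]) ].
have Heq : forall X, nonlocal_resolving_set e X = resolving_set e X.
  move=> X; apply/idP/idP.
    move=> HX; apply/forallP => u; apply/forallP => v; apply/implyP => Huv.
    case Euv: (e u v); last first.
      by move: HX => /forallP /(_ u) /forallP /(_ v); rewrite Huv Euv.
    have := HX => /forallP /(_ a) /forallP /(_ b); rewrite Hab Hnab /=.
    case/existsP => x /andP [Hx _].
    apply/existsP; exists x; rewrite Hx /=.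
    apply/negP => /eqP Hd; have := Hc _ _ Euv.
    have := Hdist u x; rewrite Hd Hdist.
    by case: (c u); case: (c v); case: (c x).
  move=> HX; apply/forallP => u; apply/forallP => v; apply/implyP => /andP [Huv _].
  by move: HX => /forallP /(_ u) /forallP /(_ v); rewrite Huv.
have HT : resolving_set e [set: T].
  apply/forallP => u; apply/forallP => v; apply/implyP => Huv.
  apply/existsP; exists u; rewrite inE /=.
  have Hd0 : forall w z, (dist e w z == 0) = (z == w).
    move=> w z; rewrite /dist; case Ei: (iota 0 #|T|) => [|i l].
      by move: Ei H3; case: #|T|.
    have Hi : i = 0 by move: Ei H3; case: #|T| => //= n [].
    by rewrite /= Hi ball0 inE; case: (z == w).
  move: (Hd0 u u) (Hd0 v u); rewrite eqxx (negbTE Huv) => /eqP -> H.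
  by rewrite eq_sym H.
rewrite /nonlocal_metric_dim /metric_dim.
case: arg_minnP; first by rewrite Heq.
move=> X1 H1 M1; case: arg_minnP => // X2 H2 M2.
apply/eqP; rewrite eqn_leq M1 ?Heq // M2 // -Heq //.
Qed.
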